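(* Let $(Y,y)$ be a special tuple whose vector $y$ has first coordinate $y_1=0$ and satisfies $y^TKy\neq 0$ (a nonaffine special tuple). If $(Y',y')$ is a special tuple equivalent to $(Y,y)$, then $y'_1=0$ and $(y')^TKy'\neq 0$, i.e. $(Y',y')$ is also nonaffine.
   Context: Let $n\ge 0$ be an integer and let $\widetilde K$ be a real symmetric $n\times n$ matrix with $\widetilde K^2=I_n$. Let $V=\mathbb R^{n+2}$ with standard basis $e_1,\dots,e_{n+2}$, and let $K=\begin{pmatrix}0&0&1\\0&\widetilde K&0\\1&0&0\end{pmatrix}$ (block sizes $1,n,1$). For $x,w\in V$ write $x^*=x^TK$ and $L_{u,w}=u\,w^*-w\,u^*$. Let $O(V,K)=\{P:P^TKP=K\}$, $\mathfrak o(V,K)=\{X:X^TK+KX=0\}$, $O(V,K)_{e_{n+2}}=\{P\in O(V,K):Pe_{n+2}=e_{n+2}\}$. A special tuple is a pair $(Y,y)$ with $Y\in\mathfrak o(V,K)$, $y\in V$; $y_1$ denotes the first coordinate of $y$. Two special tuples $(Y,y)$ and $(Y',y')$ are equivalent if there exist $P\in O(V,K)_{e_{n+2}}$, vectors $v,p\in V$ with $p^*(e_{n+2})=0$, and $v_0\in\mathbb R$ such that $Y'+L_{v,e_{n+2}}=P(Y+L_{p,y})P^{-1}$ and $y'=Py+v_0e_{n+2}$. *)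

(* Defs.v *)
From HB Require Import structures.
From mathcomp Require Import all_boot all_order all_algebra.
Set Implicit Arguments. Unset Strict Implicit. Unset Printing Implicit Defensive.
Import Order.TTheory GRing.Theory Num.Theory.
Local Open Scope ring_scope.

(* V = R^(n+2), vectors are column vectors 'cV_(n.+2); indices 0..n+1
   correspond to e_1..e_{n+2}. *)

Section Defs.
Variable R : realFieldType.
Variable n : nat.

(* K = [[0,0,1],[0,Kt,0],[1,0,0]] with block sizes 1, n, 1 *)
Definition Kmx (Kt : 'M[R]_n) : 'M[R]_(n.+2) :=
  \matrix_(i < n.+2, j < n.+2)
    if (i == 0%N :> nat) then (if (j == n.+1 :> nat) then 1 else 0)
    else if (i == n.+1 :> nat) then (if (j == 0%N :> nat) then 1 else 0)
    else if (j == 0%N :> nat) || (j == n.+1 :> nat) then 0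
    else match insub (i.-1)%N, insub (j.-1)%N with
         | Some i', Some j' => Kt i' j'
         | _, _ => 0
         end.

Definition elast : 'cV[R]_(n.+2) := delta_mx ord_max 0.

Definition star (K : 'M[R]_(n.+2)) (x : 'cV[R]_(n.+2)) : 'rV[R]_(n.+2) :=
  x^T *m K.

Definition Lmx (K : 'M[R]_(n.+2)) (u w : 'cV[R]_(n.+2)) : 'M[R]_(n.+2) :=
  u *m star K w - w *m star K u.

Definition in_O (K P : 'M[R]_(n.+2)) : Prop := P^T *m K *m P = K.
Definition in_o (K X : 'M[R]_(n.+2)) : Prop := X^T *m K + K *m X = 0.

Definition special_tuple (K Y : 'M[R]_(n.+2)) (y : 'cV[R]_(n.+2)) : Prop :=
  in_o K Y.

Definition equiv_tuple (K : 'M[R]_(n.+2))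
    (Y : 'M[R]_(n.+2)) (y : 'cV[R]_(n.+2))
    (Y' : 'M[R]_(n.+2)) (y' : 'cV[R]_(n.+2)) : Prop :=
  exists (P : 'M[R]_(n.+2)) (v p : 'cV[R]_(n.+2)) (v0 : R),
    [/\ in_O K P, P *m elast = elast,
        (star K p *m elast) 0 0 = 0,
        Y' + Lmx K v elast = P *m (Y + Lmx K p y) *m invmx P
      & y' = P *m y + v0 *: elast].

Definition first_coord (y : 'cV[R]_(n.+2)) : R := y 0 0.
Definition Knorm (K : 'M[R]_(n.+2)) (y : 'cV[R]_(n.+2)) : R := (y^T *m K *m y) 0 0.

End Defs.

(* Main.v *)
Require Import Defs.
From HB Require Import structures.
From mathcomp Require Import all_boot all_order all_algebra.
Import Order.TTheory GRing.Theory Num.Theory.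
Local Open Scope ring_scope.

Section Aux.
Variable R : realFieldType.
Variable n : nat.
Variable Kt : 'M[R]_n.
Local Notation K := (Kmx Kt).
Local Notation e := (elast R n).

Lemma eK : e^T *m K = delta_mx 0 0 :> 'rV[R]_(n.+2).
Proof.
rewrite /elast trmx_delta -rowE; apply/rowP => j; rewrite !mxE /=.
by case: j => [[|j] hj] //=; rewrite ?eqxx //= ?andbT.
Qed.

Lemma Ke : K *m e = delta_mx 0 0 :> 'cV[R]_(n.+2).
Proof.
rewrite /elast -colE; apply/colP => i; rewrite !mxE /=.
case: i => [[|i] hi] //=; rewrite ?eqxx //=.
case: (i.+1 == n.+1)%N => //=; by rewrite eqxx /= ?orbT.
Qed.

Lemma eKx (x : 'cV[R]_(n.+2)) : (e^T *m K *m x) 0 0 = x 0 0.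
Proof. by rewrite eK -rowE mxE. Qed.

Lemma xKe (x : 'cV[R]_(n.+2)) : (x^T *m K *m e) 0 0 = x 0 0.
Proof. by rewrite -mulmxA Ke -colE !mxE. Qed.
End Aux.

Lemma addE (R : realFieldType) m k (A B : 'M[R]_(m,k)) i j : (A + B) i j = A i j + B i j.
Proof. by rewrite mxE. Qed.
Lemma trZ (R : realFieldType) m k a (A : 'M[R]_(m,k)) : (a *: A)^T = a *: A^T.
Proof. by apply/matrixP=> i j; rewrite !mxE. Qed.
Lemma trD (R : realFieldType) m k (A B : 'M[R]_(m,k)) : (A + B)^T = A^T + B^T.
Proof. by apply/matrixP=> i j; rewrite !mxE. Qed.
Lemma scaleE (R : realFieldType) m k a (A : 'M[R]_(m,k)) i j : (a *: A) i j = a * A i j.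
Proof. by rewrite mxE. Qed.


Theorem lemma8 (R : realFieldType) (n : nat) (Kt : 'M[R]_n)
    (hKt_sym : Kt^T = Kt) (hKt_inv : Kt *m Kt = 1%:M)
    (Y Y' : 'M[R]_(n.+2)) (y y' : 'cV[R]_(n.+2)) :
  special_tuple (Kmx Kt) Y y ->
  special_tuple (Kmx Kt) Y' y' ->
  first_coord y = 0 -> Knorm (Kmx Kt) y != 0 ->
  equiv_tuple (Kmx Kt) Y y Y' y' ->
  first_coord y' = 0 /\ Knorm (Kmx Kt) y' != 0.
Proof.
move=> _ _ hy1 hyn [P [v [p [v0 [hP hPe _ _ ->]]]]]; move: hy1; rewrite /first_coord => hy1.
have hA : (elast R n)^T *m (Kmx Kt) *m P = (elast R n)^T *m (Kmx Kt).
  by rewrite -{1}hPe trmx_mul -!mulmxA (mulmxA P^T) hP.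
have hB : P^T *m (Kmx Kt) *m (elast R n) = (Kmx Kt) *m (elast R n) by rewrite -{1}hPe mulmxA hP.
have he0 : (elast R n) 0 0 = 0 by rewrite /elast mxE.
have h1 : first_coord (P *m y + v0 *: (elast R n)) = 0.
  rewrite /first_coord -(@eKx R n Kt) mulmxDr -scalemxAr addE scaleE mulmxA hA eKx.
  by rewrite eKx hy1 he0 mulr0 addr0.
split => //.
rewrite /Knorm trD trZ trmx_mul !mulmxDl !mulmxDr.
rewrite -!scalemxAl -!scalemxAr !addE !scaleE.
have -> : y^T *m P^T *m (Kmx Kt) *m (P *m y) = y^T *m (Kmx Kt) *m y.
  by rewrite !mulmxA -(mulmxA _ P^T) -(mulmxA _ (P^T *m (Kmx Kt))) hP.
have -> : (y^T *m P^T *m (Kmx Kt) *m (elast R n)) = y^T *m (Kmx Kt) *m (elast R n).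
  by rewrite -(mulmxA _ P^T) -(mulmxA _ (P^T *m (Kmx Kt))) hB !mulmxA.
rewrite mulmxA hA xKe eKx eKx.
move: h1; rewrite /first_coord -(@eKx R n Kt) mulmxDr -scalemxAr addE scaleE mulmxA hA.
by rewrite eKx he0 hy1 !mulr0 !addr0.
Qed.
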